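(* Let $S$ be a semigroup and $T$ a finitely generated weakly pseudo-right-unitary subsemigroup of $S$. Let $\sigma : X^+ \to T$ and $\tau : Y^+ \to S$ be choices of generators such that $X \subseteq Y$ and $\sigma$ is the restriction of $\tau$ to $X^+$. Then $L_\sigma(T) = L_\tau(S) \cap \hat{X}^*$.
   Context: For a semigroup $S$, $S^1$ denotes the monoid obtained by adjoining a new identity $1$ (even if $S$ already has one). A choice of generators for $S$ is a surjective morphism $\sigma : X^+ \to S$ from a free semigroup; it extends uniquely to $\sigma^1 : X^* \to S^1$. Let $\overline{X} = \{\overline{x} : x \in X\}$ be a set of formal inverses, $\hat{X} = X \cup \overline{X}$ (and $\hat Y$ similarly, so $\hat X \subseteq \hat Y$). The loop automaton of $S$ with respect to $\sigma$ is the directed labelled graph with vertex set $S^1$, having for each $a \in S^1$ and $x \in X$ an edge from $a$ to $a(x\sigma)$ labelled $x$ and an edge from $a(x\sigma)$ to $a$ labelled $\overline{x}$. The loop problem $L_\sigma(S) \subseteq \hat{X}^*$ is the set of words labelling paths from $1$ to $1$ in this graph (including the empty word). A subsemigroup $T$ of $S$ is weakly pseudo-right-unitary if for every $a \in S$ and every pair $x, y \in T$ with $ax \in T$, there exists $b \in T$ with $ax = bx$ and $ay = by$. *)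

(* Defs.v *)
From mathcomp Require Import all_boot.
Set Implicit Arguments. Unset Strict Implicit. Unset Printing Implicit Defensive.

(* A semigroup is given by a carrier type S and a binary operation mul,
   assumed associative where needed. *)

(* Multiplication in S^1 = option S (None is the adjoined identity 1) on the
   left by an element of S^1 and on the right by an element of S. *)
Definition mul1 (S : Type) (mul : S -> S -> S) (a : option S) (s : S) : S :=
  match a with None => s | Some a' => mul a' s end.

(* Value of a nonempty word x0 x1 ... xn under the morphism X^+ -> S induced by g. *)
Definition eval_ne (S A : Type) (mul : S -> S -> S) (g : A -> S) (x0 : A) (w : seq A) : S :=
  foldl (fun s y => mul s (g y)) (g x0) w.

Definition generates (S A : Type) (mul : S -> S -> S) (g : A -> S) : Prop :=
  forall s : S, exists (x0 : A) (w : seq A), s = eval_ne mul g x0 w.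

(* Letters of hat A: inl x is x, inr x is the formal inverse bar x. *)
Definition hat (A : Type) := (A + A)%type.

Definition loop_step (S A : Type) (mul : S -> S -> S) (g : A -> S)
    (a : option S) (l : hat A) (b : option S) : Prop :=
  match l with
  | inl x => b = Some (mul1 mul a (g x))
  | inr x => a = Some (mul1 mul b (g x))
  end.

Fixpoint loop_path (S A : Type) (mul : S -> S -> S) (g : A -> S)
    (a : option S) (w : seq (hat A)) (b : option S) : Prop :=
  match w with
  | [::] => a = b
  | l :: w' => exists c, loop_step mul g a l c /\ loop_path mul g c w' b
  end.

Definition loop_problem (S A : Type) (mul : S -> S -> S) (g : A -> S)
    (w : seq (hat A)) : Prop :=
  loop_path mul g None w None.

Definition sub_mul (S : Type) (mul : S -> S -> S) (T : S -> Prop)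
    (clT : forall a b, T a -> T b -> T (mul a b)) : sig T -> sig T -> sig T :=
  fun a b => exist T (mul (proj1_sig a) (proj1_sig b))
                     (clT _ _ (proj2_sig a) (proj2_sig b)).

Definition weakly_pru (S : Type) (mul : S -> S -> S) (T : S -> Prop) : Prop :=
  forall a x y : S, T x -> T y -> T (mul a x) ->
    exists b, T b /\ mul a x = mul b x /\ mul a y = mul b y.

Definition hat_map (X Y : Type) (i : X -> Y) (l : hat X) : hat Y :=
  match l with inl x => inl (i x) | inr x => inr (i x) end.

(* Main.v *)
Require Import Defs.
From mathcomp Require Import all_boot.
From Stdlib Require Import Classical ProofIrrelevance.

Theorem proposition3p2
  (S : Type) (mul : S -> S -> S)
  (mulA : forall a b c : S, mul a (mul b c) = mul (mul a b) c)
  (T : S -> Prop) (clT : forall a b : S, T a -> T b -> T (mul a b))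
  (wpru : weakly_pru mul T)
  (X : finType) (Y : Type) (i : X -> Y) (i_inj : injective i)
  (sigma : X -> sig T) (tau : Y -> S)
  (sigma_gen : generates (sub_mul clT) sigma)
  (tau_gen : generates mul tau)
  (restr : forall x : X, tau (i x) = proj1_sig (sigma x)) :
  forall w : seq (hat X),
    loop_problem (sub_mul clT) sigma w <->
    loop_problem mul tau (map (hat_map i) w).
Proof.
have sigeq : forall t1 t2 : sig T, proj1_sig t1 = proj1_sig t2 -> t1 = t2.
  move=> [a1 p1] [a2 p2] /= E; subst a2; by rewrite (proof_irrelevance _ p1 p2).
move=> w; split.
-
  rewrite /loop_problem.
  have H : forall v a b, loop_path (sub_mul clT) sigma a v b ->
      loop_path mul tau (omap (@proj1_sig _ _) a) (map (hat_map i) v)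
        (omap (@proj1_sig _ _) b).
    elim=> [|l v IH] a b /=; first by move=> ->.
    move=> [c [Hs Hp]]; exists (omap (@proj1_sig _ _) c); split; last exact: IH.
    case: l Hs => x /= E; rewrite E; case: a E => [a|] /= E; rewrite ?restr //.
    by case: c E Hp => [c|].
  exact: (H w None None).
- rewrite /loop_problem.
  have key : forall v,
    (loop_path mul tau None (map (hat_map i) v) None ->
       loop_path (sub_mul clT) sigma None v None) /\
    (forall t : sig T, loop_path mul tau (Some (proj1_sig t)) (map (hat_map i) v) None ->
       loop_path (sub_mul clT) sigma (Some t) v None) /\
    (forall (c : S) (u : sig T), T (mul c (proj1_sig u)) ->
       loop_path mul tau (Some c) (map (hat_map i) v) None ->
       exists b : sig T, mul (proj1_sig b) (proj1_sig u) = mul c (proj1_sig u) /\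
         loop_path (sub_mul clT) sigma (Some b) v None).
    elim=> [|l v [IHA [IHB IHC]]] /=.
      split=> //; split=> //.
    have B : forall t : sig T,
        loop_path mul tau (Some (proj1_sig t)) (map (hat_map i) (l :: v)) None ->
        loop_path (sub_mul clT) sigma (Some t) (l :: v) None.
      move=> t /= [c [Hs Hp]].
      case: l Hs => x /= Hs.
      + exists (Some (sub_mul clT t (sigma x))); split => //.
        apply: IHB => /=; by rewrite -restr -Hs.
      + case: c Hs Hp => [c|] /= Hs Hp.
        * case: Hs => Hs.
          have Tc : T (mul c (proj1_sig (sigma x))).
            rewrite -restr -Hs; exact: (proj2_sig t).
          have [b [Eb Pb]] := IHC c (sigma x) Tc Hp.
          exists (Some b); split => //=.
          congr Some; apply: sigeq => /=; by rewrite Eb -restr -Hs.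
        * exists None; split => //=.
          congr Some; apply: sigeq; by case: Hs => ->.
          exact: IHA.
    split; last split => //.
    + clear B; move=> [c [Hs Hp]].
      case: l Hs => x /= Hs; last by [].
      exists (Some (sigma x)); split => //.
      apply: IHB; by rewrite -restr -Hs.
    + move=> c u Tcu Hpath.
      case: (classic (T c)) => Tc.
        exists (exist T c Tc); split => //; exact: B.
      move: Hpath => /= [c' [Hs Hp]].
      case: l B Hs => x B /= Hs.
      * have [b [Tb [E1 E2]]] := wpru c _ _ (proj2_sig u) (proj2_sig (sigma x)) Tcu.
        exists (exist T b Tb); split => //=.
        exists (Some (sub_mul clT (exist T b Tb) (sigma x))); split => //.
        apply: IHB => /=; by rewrite -E2 -restr -Hs.
      * case: c' Hs Hp => [c'|] /= Hs Hp; case: Hs => Hs; last first.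
          by exfalso; apply: Tc; rewrite Hs restr; exact: (proj2_sig (sigma x)).
        have Tc' : T (mul c' (proj1_sig (sub_mul clT (sigma x) u))).
          by rewrite /= mulA -restr -Hs.
        have [b' [Eb Pb]] := IHC c' (sub_mul clT (sigma x) u) Tc' Hp.
        exists (sub_mul clT b' (sigma x)); split.
          by move: Eb => /=; rewrite !mulA => ->; rewrite -restr -Hs.
        by exists (Some b'); split.
  exact: (proj1 (key w)).
Qed.
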